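(* Assume $\bar\Phi_p=0$ and $\Phi_p^\top\Phi_p=\mathrm{diag}(\sigma_1^2,\dots,\sigma_d^2)$ with all $\sigma_j^2>0$. Let $\Lambda=\mathrm{diag}(\lambda_1,\dots,\lambda_d)$ with $\lambda_j\ge0$, let $\hat\beta^\Lambda_{\mathrm{ridge}}:=(\Phi_p^\top\Phi_p+\Lambda)^{-1}\Phi_p^\top Y_p$, let $\delta\ge 0$, and let $\hat w^\delta_{\ell_2}$ be the $\ell_2$ balancing weights, $\tfrac1n\hat w^\delta_{\ell_2}=\bar\Phi_q(\Phi_p^\top\Phi_p+\delta I)^{-1}\Phi_p^\top$. Define $\Gamma=\mathrm{diag}(\gamma_1,\dots,\gamma_d)$ with $$\gamma_j:=\frac{\delta\lambda_j}{\sigma_j^2+\lambda_j+\delta}$$ (with $\gamma_j:=0$ if the denominator is $0$ is impossible here since $\sigma_j^2>0$). Then $0\le\gamma_j\le\lambda_j$ for all $j$ and $$\bar\Phi_q\hat\beta^\Lambda_{\mathrm{ridge}}+\tfrac1n\hat w^\delta_{\ell_2}(Y_p-\Phi_p\hat\beta^\Lambda_{\mathrm{ridge}})=\bar\Phi_q\hat\beta^\Gamma_{\mathrm{ridge}},\qquad \hat\beta^\Gamma_{\mathrm{ridge}}:=(\Phi_p^\top\Phi_p+\Gamma)^{-1}\Phi_p^\top Y_p.$$ Moreover, if $\lambda_j=\lambda$ and $\sigma_j=\sigma$ for all $j$, then all $\gamma_j$ are equal, so $\hat\beta^\Gamma_{\mathrm{ridge}}$ is a standard ridge regression estimator.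
   Context: $\Phi_p\in\mathbb{R}^{n\times d}$ (source features), $Y_p\in\mathbb{R}^n$ (outcomes), $\Phi_q\in\mathbb{R}^{n\times d}$ (target features); $\bar\Phi_p,\bar\Phi_q\in\mathbb{R}^{1\times d}$ are column averages. The left-hand side is the augmented (''double ridge'') estimator combining a generalized ridge outcome model with $\ell_2$ balancing weights. *)

(* Defs.v *)
From HB Require Import structures.
From mathcomp Require Import all_boot all_order all_algebra.
Set Implicit Arguments. Unset Strict Implicit. Unset Printing Implicit Defensive.
Import Order.TTheory GRing.Theory Num.Theory.
Local Open Scope ring_scope.

Definition colmean (R : fieldType) (n d : nat) (Phi : 'M[R]_(n, d)) : 'rV[R]_d :=
  (n%:R)^-1 *: (const_mx 1 *m Phi).

Definition ridge (R : fieldType) (n d : nat) (Phi : 'M[R]_(n, d)) (Y : 'cV[R]_n)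
  (lam : 'rV[R]_d) : 'cV[R]_d :=
  invmx (Phi^T *m Phi + diag_mx lam) *m Phi^T *m Y.

Definition l2w_over_n (R : fieldType) (n d : nat) (Phip Phiq : 'M[R]_(n, d))
  (delta : R) : 'rV[R]_n :=
  colmean Phiq *m invmx (Phip^T *m Phip + delta%:M) *m Phip^T.

Definition gammavec (R : fieldType) (d : nat) (sigma2 lam : 'rV[R]_d) (delta : R)
  : 'rV[R]_d :=
  \row_j (delta * lam 0 j / (sigma2 0 j + lam 0 j + delta)).

(* Main.v *)
Require Import Defs.
From HB Require Import structures.
From mathcomp Require Import all_boot all_order all_algebra.
From mathcomp Require Import ring lra.
Import Order.TTheory GRing.Theory Num.Theory.
Local Open Scope ring_scope.

Lemma diag_mul (R : pzRingType) n (a b : 'rV[R]_n) :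
  diag_mx a *m diag_mx b = diag_mx (\row_j (a 0 j * b 0 j)).
Proof.
rewrite mul_diag_mx; apply/matrixP => i j; rewrite !mxE.
by case: eqVneq => [->|_]; rewrite ?mulr0 ?mulr1n ?mulr0n.
Qed.

Lemma diag_inv (R : fieldType) n (a : 'rV[R]_n) :
  (forall j, a 0 j != 0) ->
  invmx (diag_mx a) = diag_mx (\row_j (a 0 j)^-1).
Proof.
move=> nz.
have E : diag_mx a *m diag_mx (\row_j (a 0 j)^-1) = 1%:M.
  rewrite diag_mul -diag_const_mx; congr diag_mx; apply/matrixP => i j.
  by rewrite !mxE mulfV.
have [U _] := mulmx1_unit E.
by rewrite -[RHS](mulKmx U) E mulmx1.
Qed.

Theorem mainTheorem5 (R : realFieldType) (n d : nat)
  (Phip Phiq : 'M[R]_(n, d)) (Yp : 'cV[R]_n)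
  (sigma2 lam : 'rV[R]_d) (delta : R) :
  colmean Phip = 0 ->
  Phip^T *m Phip = diag_mx sigma2 ->
  (forall j, 0 < sigma2 0 j) ->
  (forall j, 0 <= lam 0 j) ->
  0 <= delta ->
  let gam := gammavec sigma2 lam delta in
  let bL := ridge Phip Yp lam in
  [/\ (forall j, 0 <= gam 0 j <= lam 0 j),
      colmean Phiq *m bL + l2w_over_n Phip Phiq delta *m (Yp - Phip *m bL)
        = colmean Phiq *m ridge Phip Yp gam
    & ((exists l, forall j, lam 0 j = l) ->
       (exists s, forall j, sigma2 0 j = s) ->
       exists g, forall j, gam 0 j = g)].
Proof.
move=> _ HS Hs Hl Hd gam bL.
have Hg : forall j, gam 0 j = delta * lam 0 j / (sigma2 0 j + lam 0 j + delta).
  by move=> j; rewrite /gam /gammavec mxE.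
split.
- move=> j; rewrite Hg.
  have s := Hs j; have l := Hl j.
  have p : 0 < sigma2 0 j + lam 0 j + delta by lra.
  apply/andP; split.
    by apply: divr_ge0; [apply: mulr_ge0|apply: ltW].
  rewrite ler_pdivrMr //; nra.
- rewrite /bL /ridge /l2w_over_n HS.
  set X := Phip^T *m Yp.
  set q := colmean Phiq.
  have -> : diag_mx sigma2 + diag_mx lam = diag_mx (sigma2 + lam) by rewrite raddfD.
  have -> : diag_mx sigma2 + delta%:M = diag_mx (sigma2 + const_mx delta)
    by rewrite raddfD -diag_const_mx.
  have -> : diag_mx sigma2 + diag_mx gam = diag_mx (sigma2 + gam) by rewrite raddfD.
  have nz1 : forall j, (sigma2 + lam) 0 j != 0.
    move=> j; rewrite mxE; have := Hs j; have := Hl j => ??; apply/eqP; lra.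
  have nz2 : forall j, (sigma2 + const_mx delta) 0 j != 0.
    move=> j; rewrite !mxE; have := Hs j => ?; apply/eqP; lra.
  have nz3 : forall j, (sigma2 + gam) 0 j != 0.
    move=> j; rewrite mxE Hg; have s := Hs j; have l := Hl j.
    have p : 0 < sigma2 0 j + lam 0 j + delta by lra.
    have : 0 <= delta * lam 0 j / (sigma2 0 j + lam 0 j + delta).
      by apply: divr_ge0; [apply: mulr_ge0|apply: ltW].
    move=> ?; apply/eqP; lra.
  rewrite !diag_inv //.
  rewrite -!mulmxA -/X.
  set D1 := diag_mx (\row_j ((sigma2 + lam) 0 j)^-1).
  set D2 := diag_mx (\row_j ((sigma2 + const_mx delta) 0 j)^-1).
  set D3 := diag_mx (\row_j ((sigma2 + gam) 0 j)^-1).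
  rewrite mulmxBr (mulmxA Phip^T Phip) HS -/X -mulmxDr; congr (q *m _).
  have -> : X - diag_mx sigma2 *m (D1 *m X) = (1%:M - diag_mx sigma2 *m D1) *m X
    by rewrite mulmxBl mul1mx mulmxA.
  rewrite (mulmxA D2) -mulmxDl; congr (_ *m X).
  rewrite -diag_const_mx.
  rewrite /D1 /D2 /D3.
  rewrite diag_mul -raddfB diag_mul -raddfD; congr diag_mx; apply/matrixP => i j.
  rewrite !mxE.
  have s := Hs j; have l := Hl j.
  have p1 : sigma2 0 j + lam 0 j != 0 by apply/eqP; lra.
  have p2 : sigma2 0 j + delta != 0 by apply/eqP; lra.
  have p3 : sigma2 0 j + lam 0 j + delta != 0 by apply/eqP; lra.
  have p4 : sigma2 0 j + delta * lam 0 j / (sigma2 0 j + lam 0 j + delta) =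
     (sigma2 0 j + lam 0 j) * (sigma2 0 j + delta) / (sigma2 0 j + lam 0 j + delta).
    by field.
  rewrite p4 invfM invrK; field; by rewrite p1 p2.
- move=> [l El] [s Es]; exists (delta * l / (s + l + delta)) => j.
  by rewrite Hg El Es.
Qed.
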